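(* For every INF sentence $\varphi$ over a vocabulary $\Sigma$, the INF propagator $O_\varphi$ is a monotone propagator for the theory $\{\varphi\}$.
   Context: Vocabularies are finite sets of predicate symbols (equality is interpreted as identity). Truth values $\mathbf{t},\mathbf{f},\mathbf{u},\mathbf{i}$; inverse: $\mathbf{t}^{-1}=\mathbf{f}$, $\mathbf{f}^{-1}=\mathbf{t}$, $\mathbf{u}^{-1}=\mathbf{u}$, $\mathbf{i}^{-1}=\mathbf{i}$. Truth order $\le_t$: $\mathbf{f}\le_t\mathbf{u}\le_t\mathbf{t}$, $\mathbf{f}\le_t\mathbf{i}\le_t\mathbf{t}$ ($\mathbf{u},\mathbf{i}$ incomparable). Precision order $\le_p$: $\mathbf{u}\le_p\mathbf{t}\le_p\mathbf{i}$, $\mathbf{u}\le_p\mathbf{f}\le_p\mathbf{i}$ ($\mathbf{t},\mathbf{f}$ incomparable). A four-valued $\Sigma$-structure $\tilde I$ has domain $D$ and assigns each $P/n\in\Sigma$ a function $P^{\tilde I}:D^n\to\{\mathbf{t},\mathbf{f},\mathbf{u},\mathbf{i}\}$; two-valued structures (only $\mathbf{t},\mathbf{f}$) are identified with ordinary structures. $\tilde I\le_p\tilde J$ iff pointwise $\le_p$. The value $\tilde I\theta(\varphi)$ of a formula under variable assignment $\theta$: $\tilde I\theta(P(\overline{x}))=P^{\tilde I}(\theta(\overline{x}))$; $\tilde I\theta(\neg\varphi)=(\tilde I\theta(\varphi))^{-1}$; $\wedge$ and $\forall$ give the $\le_t$-greatest lower bound, $\vee$ and $\exists$ the $\le_t$-least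 upper bound of the values of the components (over all $d\in D$ for quantifiers). An INF sentence is a sentence $\forall\overline{x}\,(\psi\supset L[\overline{x}])$ with $\psi$ a formula whose free variables are among $\overline{x}$ and $L$ a literal $P(\overline{x})$ or $\neg P(\overline{x})$ with free variables $\overline{x}$. The INF propagator $O_\varphi$ for $\varphi=\forall\overline{x}(\psi\supset P(\overline{x}))$: $O_\varphi(\tilde I)$ agrees with $\tilde I$ except that for each tuple $\overline{d}$ with $\tilde I[\overline{x}/\overline{d}](\psi)\ge_p\mathbf{t}$, $P^{O_\varphi(\tilde I)}(\overline{d})=\mathrm{lub}_{\le_p}\{\mathbf{t},P^{\tilde I}(\overline{d})\}$; for $\varphi=\forall\overline{x}(\psi\supset\neg P(\overline{x}))$ the same with $\mathbf{f}$ in place of $\mathbf{t}$ in the lub. A propagator for $T$ is a map $O$ on four-valued $\Sigma$-structures with (i) $\tilde I\le_p O(\tilde I)$ and (ii) $O(\tilde I)\le_p M$ for every two-valued model $M$ of $T$ with $\tilde I\le_p M$; monotone means $\tilde I\le_p\tilde J\Rightarrow O(\tilde I)\le_p O(\tilde J)$. *)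

(* Defs.v *)
From Stdlib Require Import ClassicalDescription.
From HB Require Import structures.
From mathcomp Require Import all_boot.

Set Implicit Arguments.
Unset Strict Implicit.
Unset Printing Implicit Defensive.

Definition dec (P : Prop) : bool :=
  if excluded_middle_informative P then true else false.

Inductive tv := tT | tF | tU | tI.

Definition tv_eqb (a b : tv) : bool :=
  match a, b with
  | tT, tT | tF, tF | tU, tU | tI, tI => true
  | _, _ => false
  end.
Lemma tv_eqP : Equality.axiom tv_eqb.
Proof. by case; case; constructor. Qed.
HB.instance Definition _ := hasDecEq.Build tv tv_eqP.

Definition tv_inv (a : tv) : tv :=
  match a with tT => tF | tF => tT | tU => tU | tI => tI end.

Definition le_t (a b : tv) : bool := [|| a == b, a == tF | b == tT].
Definition le_p (a b : tv) : bool := [|| a == b, a == tU | b == tI].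

Definition meet_t (a b : tv) : tv :=
  match a, b with
  | tF, _ | _, tF => tF
  | tT, x | x, tT => x
  | tU, tU => tU
  | tI, tI => tI
  | _, _ => tF (* glb of u and i *)
  end.
Definition join_t (a b : tv) : tv :=
  match a, b with
  | tT, _ | _, tT => tT
  | tF, x | x, tF => x
  | tU, tU => tU
  | tI, tI => tI
  | _, _ => tT (* lub of u and i *)
  end.

Definition glb_t_all (D : Type) (g : D -> tv) : tv :=
  if dec (exists d, g d = tF) || (dec (exists d, g d = tU) && dec (exists d, g d = tI))
  then tF
  else if dec (exists d, g d = tU) then tU
  else if dec (exists d, g d = tI) then tI
  else tT.
Definition lub_t_all (D : Type) (g : D -> tv) : tv :=
  if dec (exists d, g d = tT) || (dec (exists d, g d = tU) && dec (exists d, g d = tI))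
  then tT
  else if dec (exists d, g d = tU) then tU
  else if dec (exists d, g d = tI) then tI
  else tF.

Definition join_p (a b : tv) : tv :=
  match a, b with
  | tI, _ | _, tI => tI
  | tU, x | x, tU => x
  | tT, tT => tT
  | tF, tF => tF
  | _, _ => tI (* lub of t and f *)
  end.

Section Logic.
Variable sym : finType.
Variable arity : sym -> nat.

Inductive form : Type :=
  | FAtom (P : sym) of (arity P).-tuple nat
  | FEq of nat & nat
  | FNeg of form
  | FAnd of form & form
  | FOr of form & form
  | FForall of nat & form
  | FExists of nat & form.

Fixpoint fv (f : form) : seq nat :=
  match f with
  | FAtom _ xs => tval xs
  | FEq x y => [:: x; y]
  | FNeg g => fv g
  | FAnd g h | FOr g h => fv g ++ fv h
  | FForall x g | FExists x g => filter (fun v => v != x) (fv g)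
  end.

Definition struct (D : Type) := forall P : sym, (arity P).-tuple D -> tv.

Definition le_p_struct (D : Type) (I J : struct D) : Prop :=
  forall P e, le_p (I P e) (J P e).

Definition two_valued (D : Type) (M : struct D) : Prop :=
  forall P e, M P e = tT \/ M P e = tF.

Definition upd1 (D : Type) (th : nat -> D) (x : nat) (d : D) : nat -> D :=
  fun v => if v == x then d else th v.

(* th[xs/ds] (xs assumed duplicate-free) *)
Definition updl (D : Type) (th : nat -> D) (xs : seq nat) (ds : seq D) : nat -> D :=
  fun v => if v \in xs then nth (th v) ds (index v xs) else th v.

Fixpoint eval (D : Type) (I : struct D) (th : nat -> D) (f : form) : tv :=
  match f with
  | FAtom P xs => I P (map_tuple th xs)
  | FEq x y => if dec (th x = th y) then tT else tF
  | FNeg g => tv_inv (eval I th g)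
  | FAnd g h => meet_t (eval I th g) (eval I th h)
  | FOr g h => join_t (eval I th g) (eval I th h)
  | FForall x g => glb_t_all (fun d => eval I (upd1 th x d) g)
  | FExists x g => lub_t_all (fun d => eval I (upd1 th x d) g)
  end.

Fixpoint sat (D : Type) (M : struct D) (th : nat -> D) (f : form) : Prop :=
  match f with
  | FAtom P xs => M P (map_tuple th xs) = tT
  | FEq x y => th x = th y
  | FNeg g => ~ sat M th g
  | FAnd g h => sat M th g /\ sat M th h
  | FOr g h => sat M th g \/ sat M th h
  | FForall x g => forall d, sat M (upd1 th x d) g
  | FExists x g => exists d, sat M (upd1 th x d) g
  end.

(* INF sentences  forall xs (psi => L[xs]),  L = P(xs) (inf_pos = true)
   or L = ~P(xs) (inf_pos = false) *)
Record inf_sentence : Type := INF {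
  inf_head : sym;
  inf_pos : bool;
  inf_vars : (arity inf_head).-tuple nat;
  inf_body : form
}.

Definition is_inf (s : inf_sentence) : Prop :=
  uniq (inf_vars s) /\ {subset fv (inf_body s) <= inf_vars s}.

Definition sat_inf (D : Type) (M : struct D) (s : inf_sentence) : Prop :=
  forall (th : nat -> D) (ds : (arity (inf_head s)).-tuple D),
    let th' := updl th (inf_vars s) ds in
    sat M th' (inf_body s) ->
    (if inf_pos s then M (inf_head s) (map_tuple th' (inf_vars s)) = tT
     else ~ (M (inf_head s) (map_tuple th' (inf_vars s)) = tT)).

Definition model_of (D : Type) (M : struct D) (T : inf_sentence -> Prop) : Prop :=
  two_valued M /\ forall s, T s -> sat_inf M s.

Definition is_propagator (D : Type) (O : struct D -> struct D)
  (T : inf_sentence -> Prop) : Prop :=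
  (forall I, le_p_struct I (O I)) /\
  (forall I M, model_of M T -> le_p_struct I M -> le_p_struct (O I) M).

Definition monotone_op (D : Type) (O : struct D -> struct D) : Prop :=
  forall I J, le_p_struct I J -> le_p_struct (O I) (O J).

(* The INF propagator O_s.  The value of psi under I[xs/ds] does not
   depend on the rest of the assignment (fv psi is among xs); we
   quantify over all base assignments th. *)
Definition inf_prop (D : Type) (s : inf_sentence) (I : struct D) : struct D :=
  fun Q e =>
    if (Q == inf_head s) &&
       dec (forall th : nat -> D,
              le_p tT (eval I (updl th (inf_vars s) e) (inf_body s)))
    then join_p (if inf_pos s then tT else tF) (I Q e)
    else I Q e.

End Logic.

(* Main.v *)
Require Import Defs.
From mathcomp Require Import all_boot.
From Stdlib Require Import ClassicalDescription Classical.

Set Implicit Arguments.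
Unset Strict Implicit.

Lemma decP (P : Prop) : reflect P (dec P).
Proof. rewrite /dec; case: excluded_middle_informative => h; by constructor. Qed.

Definition glbb (a b c : bool) : tv :=
  if a || (b && c) then tF else if b then tU else if c then tI else tT.
Definition lubb (a b c : bool) : tv :=
  if a || (b && c) then tT else if b then tU else if c then tI else tF.

Lemma glbb_mono a b c d e f :
  (e ==> b) -> (c ==> f) -> (a ==> d || f) -> (d ==> a || b) ->
  le_p (glbb a b c) (glbb d e f).
Proof. by case: a; case: b; case: c; case: d; case: e; case: f. Qed.

Lemma lubb_mono a b c d e f :
  (e ==> b) -> (c ==> f) -> (a ==> d || f) -> (d ==> a || b) ->
  le_p (lubb a b c) (lubb d e f).
Proof. by case: a; case: b; case: c; case: d; case: e; case: f. Qed.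

Section S.
Variable D : Type.

Lemma bitU (g h : D -> tv) : (forall d, le_p (g d) (h d)) ->
  dec (exists d, h d = tU) ==> dec (exists d, g d = tU).
Proof.
move=> H; apply/implyP => /decP [d hd]; apply/decP; exists d.
by move: (H d); rewrite hd; case: (g d).
Qed.

Lemma bitI (g h : D -> tv) : (forall d, le_p (g d) (h d)) ->
  dec (exists d, g d = tI) ==> dec (exists d, h d = tI).
Proof.
move=> H; apply/implyP => /decP [d hd]; apply/decP; exists d.
by move: (H d); rewrite hd; case: (h d).
Qed.

Lemma bitX (g h : D -> tv) x : x != tU -> x != tI -> (forall d, le_p (g d) (h d)) ->
  dec (exists d, g d = x) ==> dec (exists d, h d = x) || dec (exists d, h d = tI).
Proof.
move=> n1 n2 H; apply/implyP => /decP [d hd].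
move: (H d); rewrite hd; case E: (h d) => Hl.
all: try (apply/orP; right; apply/decP; exists d; done).
all: apply/orP; left; apply/decP; exists d; rewrite E; move: Hl n1 n2; case: x {hd} => //.
Qed.

Lemma bitY (g h : D -> tv) x : x != tU -> x != tI -> (forall d, le_p (g d) (h d)) ->
  dec (exists d, h d = x) ==> dec (exists d, g d = x) || dec (exists d, g d = tU).
Proof.
move=> n1 n2 H; apply/implyP => /decP [d hd].
move: (H d); rewrite hd; case E: (g d) => Hl.
all: try (apply/orP; right; apply/decP; exists d; done).
all: apply/orP; left; apply/decP; exists d; rewrite E; move: Hl n1 n2; case: x {hd} => //.
Qed.

Lemma glb_mono (g h : D -> tv) : (forall d, le_p (g d) (h d)) ->
  le_p (glb_t_all g) (glb_t_all h).
Proof.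
move=> H; apply: glbb_mono; [exact: bitU|exact: bitI|exact: bitX|exact: bitY].
Qed.

Lemma lub_mono (g h : D -> tv) : (forall d, le_p (g d) (h d)) ->
  le_p (lub_t_all g) (lub_t_all h).
Proof.
move=> H; apply: lubb_mono; [exact: bitU|exact: bitI|exact: bitX|exact: bitY].
Qed.
End S.

Section E.
Variables (sym : finType) (arity : sym -> nat) (D : Type).

Lemma eval_mono (I J : struct arity D) : le_p_struct I J ->
  forall f th, le_p (eval I th f) (eval J th f).
Proof.
move=> H; elim=> [P xs|x y|g IH|g IHg h IHh|g IHg h IHh|x g IH|x g IH] th /=.
- exact: H.
- by case: dec.
- by move: (IH th); case: (eval I th g); case: (eval J th g).
- by move: (IHg th) (IHh th); case: (eval I th g); case: (eval J th g);
     case: (eval I th h); case: (eval J th h).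
- by move: (IHg th) (IHh th); case: (eval I th g); case: (eval J th g);
     case: (eval I th h); case: (eval J th h).
- by apply: glb_mono => d; apply: IH.
- by apply: lub_mono => d; apply: IH.
Qed.

Definition b2tv (b : bool) := if b then tT else tF.

Lemma eval_two (M : struct arity D) : two_valued M ->
  forall f th, eval M th f = b2tv (dec (sat M th f)).
Proof.
move=> H; elim=> [P xs|x y|g IH|g IHg h IHh|g IHg h IHh|x g IH|x g IH] th /=.
- by case: (decP (M P (map_tuple th xs) = tT)) => h //; case: (H P (map_tuple th xs)).
- by [].
- rewrite IH; by case: (decP (sat M th g)); case: (decP (~ sat M th g)).
- rewrite IHg IHh; case: (decP (sat M th g)); case: (decP (sat M th h));
  case: (decP (sat M th g /\ sat M th h)); tauto.
- rewrite IHg IHh; case: (decP (sat M th g)); case: (decP (sat M th h));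
  case: (decP (sat M th g \/ sat M th h)); tauto.
- rewrite /glb_t_all.
  have nU : dec (exists d, eval M (upd1 th x d) g = tU) = false.
    by apply/decP => -[d]; rewrite IH; case: dec.
  have nI : dec (exists d, eval M (upd1 th x d) g = tI) = false.
    by apply/decP => -[d]; rewrite IH; case: dec.
  rewrite nU nI /= orbF.
  case: (decP (exists d, eval M (upd1 th x d) g = tF)) => [[d]|hn];
  case: (decP (forall d, sat M (upd1 th x d) g)) => // hs.
  + by rewrite IH; case: (decP (sat M (upd1 th x d) g)) => //; move: (hs d).
  + exfalso; apply: hs => d; apply: NNPP => nd; apply: hn; exists d.
    by rewrite IH; case: (decP (sat M (upd1 th x d) g)).
- rewrite /lub_t_all.
  have nU : dec (exists d, eval M (upd1 th x d) g = tU) = false.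
    by apply/decP => -[d]; rewrite IH; case: dec.
  have nI : dec (exists d, eval M (upd1 th x d) g = tI) = false.
    by apply/decP => -[d]; rewrite IH; case: dec.
  rewrite nU nI /= orbF.
  case: (decP (exists d, eval M (upd1 th x d) g = tT)) => [[d hd]|hn];
  case: (decP (exists d, sat M (upd1 th x d) g)) => // hs.
  + by exfalso; apply: hs; exists d; move: hd; rewrite IH; case: (decP (sat M (upd1 th x d) g)).
  + by exfalso; case: hs => d hd; apply: hn; exists d; rewrite IH; case: (decP (sat M (upd1 th x d) g)).
Qed.

End E.

Lemma map_updl (D : Type) (th : nat -> D) (xs : seq nat) (ds : seq D) :
  uniq xs -> size ds = size xs -> map (updl th xs ds) xs = ds.
Proof.
move=> u sz; apply: (@eq_from_nth _ (th 0)); first by rewrite size_map.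
move=> i; rewrite size_map => hi.
rewrite (nth_map 0) // /updl mem_nth // index_uniq //.
by apply: set_nth_default; rewrite sz.
Qed.

Lemma le_p_trans a b c : le_p a b -> le_p b c -> le_p a c.
Proof. by case: a; case: b; case: c. Qed.

Theorem proposition4p3 (sym : finType) (arity : sym -> nat)
  (s : inf_sentence arity) (D : Type) :
  inhabited D -> is_inf s ->
  is_propagator (inf_prop (D := D) s) (fun s' => s' = s) /\
  monotone_op (inf_prop (D := D) s).
Proof.
move=> [d0] [us _]; split; [split|].
- move=> I Q e; rewrite /inf_prop; case: ifP => _.
  + by case: (I Q e); case: inf_pos.
  + by case: (I Q e).
- move=> I M [tw Hm] HIM Q e; rewrite /inf_prop.
  case: ifP => [/andP [/eqP EQ /decP Hc] | _]; last exact: HIM.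
  subst Q.
  have Hc1 := Hc (fun _ => d0).
  set th' := updl (fun _ => d0) (inf_vars s) e in Hc1.
  have Hm2 := eval_mono HIM (inf_body s) th'.
  rewrite (eval_two tw) in Hm2.
  have Hs : sat M th' (inf_body s).
    apply/decP; move: (le_p_trans Hc1 Hm2); rewrite /b2tv; by case: dec.
  have Hr := Hm s erefl (fun _ => d0) e Hs.
  have Emap : map_tuple th' (inf_vars s) = e.
    by apply: val_inj; rewrite /= map_updl // !size_tuple.
  rewrite Emap in Hr.
  have Hle := HIM (inf_head s) e.
  case: (inf_pos s) Hr => Hr.
  + by move: Hle; rewrite Hr; case: (I (inf_head s) e).
  + have Hf : M (inf_head s) e = tF by case: (tw (inf_head s) e).
    by move: Hle; rewrite Hf; case: (I (inf_head s) e).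
- move=> I J HIJ Q e; rewrite /inf_prop.
  have Hle := HIJ Q e.
  case: (Q == inf_head s) => /=; last exact: Hle.
  match goal with |- is_true (le_p (if dec ?A then _ else _) (if dec ?B then _ else _)) =>
    have Hc : dec A -> dec B;
    [ move=> /decP h; apply/decP => th; apply: le_p_trans (h th) _; exact: eval_mono
    | move: Hc; case: (dec A); case: (dec B) => //= Hc'; try (by have := Hc' isT) ] end.
  all: by move: Hle; case: (I Q e); case: (J Q e); case: inf_pos.
Qed.
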